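(* Fix a general instance satisfying the unique-default-action assumption, with relevant-action tie-breaking, and a true bias $\alpha^\star\in(0,1]$. Suppose there is a true-bias optimal scheme $\tau^\star$ with $P_{\rm info}^{\alpha^\star}(\tau^\star)=0$. Then there exists $\delta>0$ such that for every interval $J\subseteq(0,1]$ with $\alpha^\star\in J$ and $|J|\le\delta$: - every atom $(p_i,\nu_i,a_i)$ of $\tau^\star$ with $p_i>0$ satisfies $\nu_i\in R_{a_i}^J$; - $\tau^\star$ attains the interval-safe optimum, so that $\mathrm{OPT}^{\rm safe}(J)=\mathrm{OPT}(\alpha^\star)$.
   Context: General model: finite $\Omega$, $A$, full-support prior $\mu_0$, utilities $u_S,u_R$, and $\Delta u_{a,a'}(\omega)=u_R(a,\omega)-u_R(a',\omega)$. A receiver with bias $\alpha$ best-responds to $(1-\alpha)\mu_0+\alpha\nu$. Action regions. For $\alpha\in(0,1]$: $b_{a,a'}(\alpha)=\frac{\alpha-1}{\alpha}\Delta u_{a,a'}^\top\mu_0$ and $R_a^\alpha=\{\nu\in\Delta(\Omega):\Delta u_{a,a'}^\top\nu\ge b_{a,a'}(\alpha)\ \forall a'\neq a\}$. For $J=[\underline\alpha,\overline\alpha]\subseteq(0,1]$: $b_{a,a'}(J)=\max\{b_{a,a'}(\underline\alpha),b_{a,a'}(\overline\alpha)\}$, $R_a^J$ is defined as $R_a^\alpha$ with $b_{a,a'}(J)$, and $\mathrm{int}_{IC}(R_a^J)$ uses strict inequalities. Relevant actions: $A_{\rm rel}$ is the set of actions that are the unique receiver best response at $\alpha^\star$ for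 some posterior. Tie-breaking: never outside $A_{\rm rel}$, and sender-favorable among relevant ties. Unique default action $a_0$ at the prior. Schemes. A scheme is a finite list of triples $(p_i,\nu_i,a_i)$ with $\sum p_i=1$, $p_i\ge0$, $\sum p_i\nu_i=\mu_0$, and value $\sum_i p_i\sum_\omega\nu_i(\omega)u_S(a_i,\omega)$. - $\mathrm{OPT}(\alpha^\star)$ is the supremum of values over schemes with $a_i\in A_{\rm rel}$ and $\nu_i\in R_{a_i}^{\alpha^\star}$; a true-bias optimal scheme attains it. - $\mathrm{OPT}^{\rm safe}(J)$ is the supremum over schemes with $\nu_i\in R_{a_i}^J$ and $\mathrm{int}_{IC}(R_{a_i}^J)\ne\emptyset$. Informative mass. A pair $(a,a')$ is movable if $\Delta u_{a,a'}^\top\mu_0\neq0$. $P^{\alpha^\star}_{\rm info}(\tau)$ is the total mass of atoms with $\Delta u_{a_i,a'}^\top\nu_i=b_{a_i,a'}(\alpha^\star)$ for some movable pair $(a_i,a')$. *)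

(* Defs.v *)
From HB Require Import structures.
From mathcomp Require Import all_boot all_order all_algebra.
From mathcomp Require Import boolp classical_sets reals.

Set Implicit Arguments.
Unset Strict Implicit.
Unset Printing Implicit Defensive.

Import Order.TTheory GRing.Theory Num.Theory.
Local Open Scope ring_scope.
Local Open Scope classical_set_scope.

Record atom (R : Type) (Om A : Type) := Atom {
  pr : R;
  post : Om -> R;
  act : A
}.

Fixpoint allProp (T : Type) (P : T -> Prop) (s : seq T) : Prop :=
  match s with
  | [::] => True
  | x :: s' => P x /\ allProp P s'
  end.

Section Model.
Variables (R : realType) (Om A : finType).

Definition dot (f g : Om -> R) : R := \sum_(w : Om) f w * g w.

Definition simplex (nu : Om -> R) : Prop :=
  (forall w, 0 <= nu w) /\ \sum_(w : Om) nu w = 1.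

Definition full_support_prior (mu0 : Om -> R) : Prop :=
  (forall w, 0 < mu0 w) /\ \sum_(w : Om) mu0 w = 1.

Variables (uR : A -> Om -> R) (mu0 : Om -> R).

Definition du (a a' : A) : Om -> R := fun w => uR a w - uR a' w.

Definition unique_BR (q : Om -> R) (a : A) : Prop :=
  forall a', a' != a -> dot q (uR a') < dot q (uR a).

Definition unique_default : Prop := exists a0 : A, unique_BR mu0 a0.

Definition belief (alpha : R) (nu : Om -> R) : Om -> R :=
  fun w => (1 - alpha) * mu0 w + alpha * nu w.

Definition A_rel (alpha : R) (a : A) : Prop :=
  exists nu, simplex nu /\ unique_BR (belief alpha nu) a.

Definition bnd (a a' : A) (alpha : R) : R :=
  (alpha - 1) / alpha * dot (du a a') mu0.

Definition region (alpha : R) (a : A) (nu : Om -> R) : Prop :=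
  simplex nu /\ forall a', a' != a -> bnd a a' alpha <= dot (du a a') nu.

Definition bndJ (a a' : A) (lo hi : R) : R :=
  Num.max (bnd a a' lo) (bnd a a' hi).

Definition regionJ (lo hi : R) (a : A) (nu : Om -> R) : Prop :=
  simplex nu /\ forall a', a' != a -> bndJ a a' lo hi <= dot (du a a') nu.

Definition intIC (lo hi : R) (a : A) (nu : Om -> R) : Prop :=
  simplex nu /\ forall a', a' != a -> bndJ a a' lo hi < dot (du a a') nu.

Definition is_scheme (tau : seq (atom R Om A)) : Prop :=
  allProp (fun t => 0 <= pr t) tau /\
  \sum_(t <- tau) pr t = 1 /\
  (forall w, \sum_(t <- tau) pr t * post t w = mu0 w).

Variable uS : A -> Om -> R.

Definition value (tau : seq (atom R Om A)) : R :=
  \sum_(t <- tau) pr t * dot (post t) (uS (act t)).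

(* feasibility for OPT(alpha) (relevant-action tie-breaking) *)
Definition feasible_true (alpha : R) (tau : seq (atom R Om A)) : Prop :=
  is_scheme tau /\
  allProp (fun t => A_rel alpha (act t) /\ region alpha (act t) (post t)) tau.

Definition OPT (alpha : R) : R :=
  sup [set v | exists tau, feasible_true alpha tau /\ v = value tau].

Definition true_bias_optimal (alpha : R) (tau : seq (atom R Om A)) : Prop :=
  feasible_true alpha tau /\ value tau = OPT alpha.

Definition feasible_safe (lo hi : R) (tau : seq (atom R Om A)) : Prop :=
  is_scheme tau /\
  allProp (fun t => regionJ lo hi (act t) (post t) /\
                 exists nu, intIC lo hi (act t) nu) tau.

Definition OPT_safe (lo hi : R) : R :=
  sup [set v | exists tau, feasible_safe lo hi tau /\ v = value tau].

Definition movable (a a' : A) : bool := dot (du a a') mu0 != 0.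

Definition P_info (alpha : R) (tau : seq (atom R Om A)) : R :=
  \sum_(t <- tau | [exists a' : A, (a' != act t) && movable (act t) a'
                      && (dot (du (act t) a') (post t) == bnd (act t) a' alpha)])
     pr t.

End Model.

(* Main.v *)
Require Import Defs.
From HB Require Import structures.
From mathcomp Require Import all_boot all_order all_algebra.
From mathcomp Require Import boolp classical_sets reals.
From mathcomp Require Import ring lra.
Import Order.TTheory GRing.Theory Num.Theory.
Local Open Scope ring_scope.
Set Implicit Arguments.
Unset Strict Implicit.

Section Helpers.
Variable R : realType.

Lemma L1 (astar c x : R) : 0 < astar -> (astar - 1) / astar * c < x ->
  exists d : R, 0 < d /\ forall lo hi : R, 0 < lo -> lo <= astar -> astar <= hi ->
   hi - lo <= d -> Num.max ((lo - 1) / lo * c) ((hi - 1) / hi * c) < x.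
Proof.
move=> a0.
have key : forall al : R, 0 < al -> ((al - 1) / al * c < x) = (0 < al * (x - c) + c).
  move=> al al0; rewrite mulrAC ltr_pdivrMr //.
  apply/idP/idP => H; nra.
rewrite key // => g0.
set g := astar * (x - c) + c in g0.
exists (g / (`|x - c| + 1)); split.
  by apply: divr_gt0 => //; rewrite ltr_pwDr // normr_ge0.
move=> lo hi lo0 loa ahi hl.
have hi0 : 0 < hi by apply: lt_le_trans ahi.
have Hd : forall al, `|al - astar| <= g / (`|x - c| + 1) -> 0 < al * (x - c) + c.
  move=> al Hal.
  have n1 : 0 < `|x - c| + 1 by rewrite ltr_pwDr // normr_ge0.
  have : `|al - astar| * (`|x - c| + 1) <= g by rewrite -ler_pdivlMr.
  have e : al * (x - c) + c = g + (al - astar) * (x - c) by rewrite /g; ring.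
  rewrite e => H.
  have : `|(al - astar) * (x - c)| <= `|al - astar| * `|x - c| by rewrite normrM.
  have := ler_norm ((al - astar) * (x - c)).
  have := normr_ge0 (al - astar).
  have := ler_normr ((al - astar) * (x - c)) (`|al - astar| * `|x - c|).
  move=> _ h1 h2 h3.
  have := ler_norm (- ((al - astar) * (x - c))).
  rewrite normrN.
  nra.
rewrite gt_max !key //; apply/andP; split; apply: Hd.
  rewrite ler0_norm; last by rewrite subr_le0.
  by apply: le_trans hl; lra.
rewrite ger0_norm; last by rewrite subr_ge0.
by apply: le_trans hl; lra.
Qed.

Definition Good (astar : R) (Q : R -> R -> Prop) (d : R) : Prop :=
  forall lo hi : R, 0 < lo -> lo <= astar -> astar <= hi -> hi - lo <= d -> Q lo hi.

Lemma good_and astar Q1 Q2 d1 d2 : 0 < d1 -> 0 < d2 ->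
  Good astar Q1 d1 -> Good astar Q2 d2 ->
  exists d, 0 < d /\ Good astar (fun lo hi => Q1 lo hi /\ Q2 lo hi) d.
Proof.
move=> d10 d20 G1 G2; exists (Num.min d1 d2); split; first by rewrite lt_min d10.
move=> lo hi h1 h2 h3 h4; move: h4; rewrite le_min => /andP[e1 e2].
by split; [apply: G1 | apply: G2].
Qed.

Lemma good_seq (T : eqType) astar (Q : T -> R -> R -> Prop) (s : seq T) :
  (forall x, exists d, 0 < d /\ Good astar (Q x) d) ->
  exists d, 0 < d /\ Good astar (fun lo hi => forall x, x \in s -> Q x lo hi) d.
Proof.
move=> H; elim: s => [|y s [d [d0 Gd]]].
  by exists 1; split => // lo hi *; rewrite in_nil.
have [e [e0 Ge]] := H y.
have [f [f0 Gf]] := good_and d0 e0 Gd Ge.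
exists f; split => // lo hi h1 h2 h3 h4 x; rewrite in_cons => /orP[/eqP->|xs].
  by case: (Gf lo hi h1 h2 h3 h4).
by case: (Gf lo hi h1 h2 h3 h4) => + _; apply.
Qed.

Lemma good_fin (T : finType) astar (Q : T -> R -> R -> Prop) :
  (forall x, exists d, 0 < d /\ Good astar (Q x) d) ->
  exists d, 0 < d /\ Good astar (fun lo hi => forall x, Q x lo hi) d.
Proof.
move=> H; have [d [d0 Gd]] := good_seq (enum T) H; exists d; split => // lo hi h1 h2 h3 h4 x.
by apply: (Gd lo hi h1 h2 h3 h4); rewrite mem_enum.
Qed.

Lemma good_list (T : Type) astar (Q : T -> R -> R -> Prop) (s : seq T) :
  allProp (fun x => exists d, 0 < d /\ Good astar (Q x) d) s ->
  exists d, 0 < d /\ Good astar (fun lo hi => allProp (fun x => Q x lo hi) s) d.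
Proof.
elim: s => [|y s IH] /=.
  by move=> _; exists 1; split.
move=> [[e [e0 Ge]] /IH [d [d0 Gd]]].
exact: good_and e0 d0 Ge Gd.
Qed.

End Helpers.

Lemma allProp_impl (T : Type) (P Q : T -> Prop) s :
  (forall x, P x -> Q x) -> allProp P s -> allProp Q s.
Proof. by move=> H; elim: s => //= x s IH [/H ? /IH ?]. Qed.

Lemma allProp_and (T : Type) (P Q : T -> Prop) s :
  allProp P s -> allProp Q s -> allProp (fun x => P x /\ Q x) s.
Proof. by elim: s => //= x s IH [? ?] [? ?]; split; [split|apply: IH]. Qed.

Lemma allProp_filter (T : Type) (p : pred T) (Q : T -> Prop) s :
  allProp (fun t => p t -> Q t) s -> allProp Q (filter p s).
Proof. by elim: s => //= x s IH [H1 H2]; case: ifP => px /=; [split; [apply: H1|apply: IH]|apply: IH]. Qed.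

Lemma sum_filter0 (R : realType) (T : Type) (p : pred T) (F : T -> R) s :
  allProp (fun t => ~~ p t -> F t = 0) s ->
  \sum_(t <- filter p s) F t = \sum_(t <- s) F t.
Proof.
elim: s => //= x s IH [H1 H2]; rewrite big_cons; case: ifP => px.
  by rewrite big_cons IH.
by rewrite H1 ?px // add0r IH.
Qed.

Lemma sum_sel0 (R : realType) (T : Type) (P : pred T) (F : T -> R) s :
  allProp (fun t => 0 <= F t) s -> \sum_(t <- s | P t) F t = 0 ->
  allProp (fun t => P t -> F t = 0) s.
Proof.
elim: s => //= x s IH [H1 H2]; rewrite big_cons.
have S0 : 0 <= \sum_(t <- s | P t) F t.
  elim: s {IH} H2 => [|y s' IH'] /=; first by rewrite big_nil.
  by move=> [? ?]; rewrite big_cons; case: ifP => _; [apply: addr_ge0 => //; apply: IH'|apply: IH'].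
case: ifP => Px.
  by move/eqP; rewrite paddr_eq0 // => /andP[/eqP Fx /eqP /(IH H2)]; split.
by move=> /(IH H2); split => //; rewrite Px.
Qed.

Section Model2.
Variables (R : realType) (Om A : finType) (mu0 : Om -> R) (uS uR : A -> Om -> R).

Lemma dot_diff (alpha : R) nu a a' :
  dot (belief mu0 alpha nu) (uR a) - dot (belief mu0 alpha nu) (uR a') =
  (1 - alpha) * dot (du uR a a') mu0 + alpha * dot (du uR a a') nu.
Proof.
rewrite /dot -sumrB !mulr_sumr -big_split; apply: eq_bigr => w _.
rewrite /belief /du /=; ring.
Qed.

Lemma BR_bnd (alpha : R) nu a a' : 0 < alpha ->
  (dot (belief mu0 alpha nu) (uR a') < dot (belief mu0 alpha nu) (uR a)) =
  (bnd uR mu0 a a' alpha < dot (du uR a a') nu).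
Proof.
move=> al0; rewrite -subr_gt0 dot_diff /bnd mulrAC ltr_pdivrMr //.
set c := dot _ mu0; set y := dot _ nu.
by apply/idP/idP => H; nra.
Qed.

Lemma bnd_mid (lo astar hi : R) a a' : 0 < lo -> lo <= astar -> astar <= hi ->
  bnd uR mu0 a a' astar <= bndJ uR mu0 a a' lo hi.
Proof.
move=> lo0 la ah.
have a0 : 0 < astar by apply: lt_le_trans la.
have h0 : 0 < hi by apply: lt_le_trans ah.
rewrite /bndJ /bnd; set c := dot _ mu0.
have E : forall x : R, 0 < x -> (x - 1) / x = 1 - x^-1.
  by move=> x x0; rewrite mulrBl divff ?gt_eqF // mul1r.
rewrite !E //.
have i1 : hi^-1 <= astar^-1 by rewrite lef_pV2 ?posrE.
have i2 : astar^-1 <= lo^-1 by rewrite lef_pV2 ?posrE.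
case: (lerP 0 c) => c0.
  rewrite le_max; apply/orP; right; nra.
rewrite le_max; apply/orP; left; nra.
Qed.

Lemma bnd0 a a' (al : R) : ~~ movable uR mu0 a a' -> bnd uR mu0 a a' al = 0.
Proof. by rewrite /movable negbK => /eqP e; rewrite /bnd e mulr0. Qed.

Lemma Lstrict (astar : R) a a' x : 0 < astar -> bnd uR mu0 a a' astar < x ->
  exists d, 0 < d /\ Good astar (fun lo hi => bndJ uR mu0 a a' lo hi < x) d.
Proof. by move=> a0 H; exact: (L1 a0 H). Qed.

Definition Mb : R := \sum_(a : A) \sum_(w : Om) `|uS a w|.

Lemma dot_le_Mb nu a : simplex nu -> dot nu (uS a) <= Mb.
Proof.
move=> [nu0 nu1].
have hb : forall w, uS a w <= Mb.
  move=> w; apply: le_trans (ler_norm _) _.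
  rewrite /Mb (bigD1 a) //= (bigD1 w) //= -addrA lerDl.
  apply: addr_ge0; apply: sumr_ge0 => *; [|apply: sumr_ge0 => *]; exact: normr_ge0.
apply: (@le_trans _ _ (\sum_w nu w * Mb)).
  by apply: ler_sum => w _; exact (ler_wpM2l (nu0 w) (hb w)).
by rewrite -mulr_suml nu1 mul1r.
Qed.

Lemma value_le (s : seq (atom R Om A)) : allProp (fun t => 0 <= pr t /\ simplex (post t)) s ->
  value uS s <= Mb * \sum_(t <- s) pr t.
Proof.
elim: s => [|t s IH] /=; first by rewrite /value !big_nil mulr0.
move=> [[p0 sp] /IH H]; rewrite /value !big_cons mulrDr.
apply: lerD; last exact: H.
by rewrite [Mb * pr t]mulrC; exact (ler_wpM2l p0 (dot_le_Mb _ sp)).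
Qed.

Lemma value_true_le (al : R) (s : seq (atom R Om A)) : feasible_true uR mu0 al s -> value uS s <= Mb.
Proof.
move=> [[Hp [Hs _]] Hall].
have := @value_le s.
rewrite Hs mulr1; apply.
apply: allProp_and => //; apply: allProp_impl Hall => t [_ [sp _]] //.
Qed.


Lemma safe_true (lo astar hi : R) s : 0 < lo -> lo <= astar -> astar <= hi ->
  feasible_safe uR mu0 lo hi s -> feasible_true uR mu0 astar s.
Proof.
move=> h1 h2 h3 [Hs Hall]; split => //.
have a0 : 0 < astar by apply: lt_le_trans h2.
apply: allProp_impl Hall => t [[sp Hr] [nu [snu Hnu]]]; split.
  exists nu; split => // a' na'; rewrite BR_bnd //.
  exact: le_lt_trans (bnd_mid _ _ h1 h2 h3) (Hnu a' na').
by split => // a' na'; exact: le_trans (bnd_mid _ _ h1 h2 h3) (Hr a' na').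
Qed.

End Model2.

Theorem mainTheorem7 (R : realType) (Om A : finType) (mu0 : Om -> R)
  (uS uR : A -> Om -> R) (astar : R) (tau : seq (atom R Om A)) :
  full_support_prior mu0 ->
  unique_default uR mu0 ->
  0 < astar <= 1 ->
  true_bias_optimal uR mu0 uS astar tau ->
  P_info uR mu0 astar tau = 0 ->
  exists delta : R, 0 < delta /\
    forall lo hi : R, 0 < lo -> lo <= astar -> astar <= hi -> hi <= 1 ->
      hi - lo <= delta ->
      allProp (fun t => 0 < pr t -> regionJ uR mu0 lo hi (act t) (post t)) tau /\
      feasible_safe uR mu0 lo hi [seq t <- tau | 0 < pr t] /\
      value uS tau = OPT_safe uR mu0 uS lo hi /\
      OPT_safe uR mu0 uS lo hi = OPT uR mu0 uS astar.
Proof.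
move=> _ _ /andP[a0 a1] [[[Hpr [Hsum Hbay]] Hall] Hval] Hinfo.
have Hz := sum_sel0 Hpr Hinfo.
have Hatoms : allProp (fun t => exists d, 0 < d /\ Good astar (fun lo hi =>
    (0 < pr t -> regionJ uR mu0 lo hi (act t) (post t)) /\
    exists nu, intIC uR mu0 lo hi (act t) nu) d) tau.
  apply: allProp_impl (allProp_and Hall Hz) => t [[[nu [snu HBR]] [sp Hreg]] Hzt].
  pose Q := (fun a' lo hi => a' != act t ->
    (0 < pr t -> bndJ uR mu0 (act t) a' lo hi <= dot (du uR (act t) a') (post t)) /\
    bndJ uR mu0 (act t) a' lo hi < dot (du uR (act t) a') nu).
  have HQ : forall a', exists d, 0 < d /\ Good astar (Q a') d.
    move=> a'; case: (eqVneq a' (act t)) => [-> | na'].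
      by exists 1; split => // lo hi _ _ _ _; rewrite /Q eqxx.
    have s1 : bnd uR mu0 (act t) a' astar < dot (du uR (act t) a') nu.
      by rewrite -BR_bnd //; exact: HBR.
    have [d1 [d10 G1]] := Lstrict a0 s1.
    have [d2 [d20 G2]] : exists d, 0 < d /\ Good astar (fun lo hi => 0 < pr t ->
        bndJ uR mu0 (act t) a' lo hi <= dot (du uR (act t) a') (post t)) d.
      case: (boolP (0 < pr t)) => pp; last first.
        by exists 1; split => // lo hi _ _ _ _ pp'; rewrite pp' in pp.
      case: (boolP (movable uR mu0 (act t) a')) => mv.
        have ne : dot (du uR (act t) a') (post t) != bnd uR mu0 (act t) a' astar.
          apply/negP => /eqP e.
          have : pr t = 0 by apply: Hzt; apply/existsP; exists a'; rewrite na' mv e eqxx.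
          by move=> e0; rewrite e0 ltxx in pp.
        have s2 : bnd uR mu0 (act t) a' astar < dot (du uR (act t) a') (post t).
          by rewrite lt_neqAle eq_sym ne Hreg.
        have [d2 [d20 G2]] := Lstrict a0 s2.
        exists d2; split => // lo hi h1 h2 h3 h4 _; apply: ltW; exact: G2.
      exists 1; split => // lo hi _ _ _ _ _.
      rewrite /bndJ !bnd0 // maxxx; have := Hreg a' na'; by rewrite bnd0.
    have [d [d0 Gd]] := good_and d10 d20 G1 G2.
    exists d; split => // lo hi h1 h2 h3 h4 _.
    by case: (Gd lo hi h1 h2 h3 h4).
  have [d [d0 Gd]] := good_fin HQ.
  exists d; split => // lo hi h1 h2 h3 h4; split.
    by move=> pp; split => // a' na'; exact: (Gd lo hi h1 h2 h3 h4 a' na').1 pp.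
  by exists nu; split => // a' na'; exact: (Gd lo hi h1 h2 h3 h4 a' na').2.
have [d [d0 Gd]] := good_list Hatoms.
exists d; split => // lo hi h1 h2 h3 _ h5.
have Ht := Gd lo hi h1 h2 h3 h5.
have Hp0 : allProp (fun t => ~~ (0 < pr t) -> pr t = 0) tau.
  apply: allProp_impl Hpr => t p np; apply/eqP; rewrite eq_le p andbT.
  by rewrite leNgt.
have Hfs : feasible_safe uR mu0 lo hi [seq t <- tau | 0 < pr t].
  split; [split; [|split]|].
  - by apply: allProp_filter; apply: allProp_impl Hpr.
  - by rewrite sum_filter0.
  - move=> w; rewrite sum_filter0 ?Hbay //.
    by apply: allProp_impl Hp0 => t H np; rewrite H // mul0r.
  - apply: allProp_filter; apply: allProp_impl Ht => t [H1 H2] pp; split => //.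
    exact: H1 pp.
have Vf : value uS [seq t <- tau | 0 < pr t] = value uS tau.
  rewrite /value sum_filter0 //.
  by apply: allProp_impl Hp0 => t H np; rewrite H // mul0r.
have la : lo <= astar by [].
have hubT : has_ubound [set v | exists s, feasible_true uR mu0 astar s /\ v = value uS s].
  by exists (Mb uS) => v [s [fs ->]]; exact: value_true_le fs.
have hubS : has_ubound [set v | exists s, feasible_safe uR mu0 lo hi s /\ v = value uS s].
  exists (Mb uS) => v [s [fs ->]].
  by have := safe_true h1 h2 h3 fs; exact: value_true_le.
have le1 : value uS tau <= OPT_safe uR mu0 uS lo hi.
  rewrite -Vf; apply: (ub_le_sup hubS); exists [seq t <- tau | 0 < pr t]; split => //.
have le2 : OPT_safe uR mu0 uS lo hi <= value uS tau.
  apply: ge_sup; first by exists (value uS [seq t <- tau | 0 < pr t]); exists [seq t <- tau | 0 < pr t].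
  move=> v [s [fs ->]]; rewrite Hval; apply: (ub_le_sup hubT); exists s; split => //.
  exact: safe_true h1 h2 h3 fs.
have E : value uS tau = OPT_safe uR mu0 uS lo hi by apply/eqP; rewrite eq_le le1 le2.
split; first by apply: allProp_impl Ht => t [].
by split => //; split => //; rewrite -E.
Qed.
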